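(* For all $n,k\in\mathbb N$ and all $t\in(0,1)$, the matrix $A_{n,k,t}$ is a GKK matrix, i.e. a weakly sign-symmetric $P$-matrix.
   Context: For $x\in\mathbb R$, $x_+=\max\{x,0\}$. For $k\in\mathbb{N}$ and $t\in(0,1)$, $A_{\infty,k,t}=(A(i,j))_{i,j\ge1}$ is the infinite Toeplitz Hessenberg matrix with $A(i,j)=a_{j-i}$ for $j\ge i$, $A(i+1,i)=1$, and $A(i,j)=0$ for $i\ge j+2$, where $(a_0,a_1,\ldots)$ is the unique sequence for which the leading principal minors satisfy $\det A(\{1,\dots,n\})=t^{(n-k-1)_+}$ for all $n\in\mathbb N$. $A_{n,k,t}$ is the leading principal $n\times n$ submatrix of $A_{\infty,k,t}$. For $A\in\mathbb C^{n\times n}$ and $\alpha,\beta\subseteq\{1,\dots,n\}$ with $\#\alpha=\#\beta$, $A[\alpha,\beta]$ is the determinant of the submatrix with rows $\alpha$ and columns $\beta$, $A[\alpha]=A[\alpha,\alpha]$, $A[\emptyset]=1$. $A$ is a $P$-matrix if $A[\alpha]>0$ for all $\alpha\subseteq\{1,\dots,n\}$. $A$ is weakly sign-symmetric if $A[\alpha,\beta]A[\beta,\alpha]\ge0$ for all $\alpha,\beta$ with $\#\alpha=\#\beta=\#(\alpha\cup\beta)-1$. *)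

(* Defs.v *)
From HB Require Import structures.
From mathcomp Require Import all_boot all_order all_algebra.
From mathcomp Require Import reals.
Set Implicit Arguments. Unset Strict Implicit. Unset Printing Implicit Defensive.
Import Order.TTheory GRing.Theory Num.Theory.
Local Open Scope ring_scope.

(* x_+ = max {x, 0} on nat (the exponent (n-k-1)_+); nat subtraction is
   already truncated, so (n - k - 1)%N = (n-k-1)_+ . *)
Definition posp (m : int) : nat := `|Num.max m 0|%N.

(* The n x n leading principal submatrix of the infinite Toeplitz Hessenberg
   matrix A_infty: entries A(i,j) = a_(j-i) for j >= i, A(i+1,i) = 1,
   A(i,j) = 0 for i >= j+2.  (0-based indices; this does not affect entries.) *)
Definition toepHess {R : nzRingType} (a : nat -> R) (n : nat) : 'M[R]_n :=
  \matrix_(i < n, j < n)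
    if (i <= j)%N then a (j - i)%N
    else if i == j.+1 :> nat then 1 else 0.

Definition leading_minors_prop {R : realType} (k : nat) (t : R) (a : nat -> R) :=
  forall n : nat, (0 < n)%N ->
    \det (toepHess a n) = t ^+ posp (n%:Z - k%:Z - 1).

(* A[alpha, beta]: determinant of the submatrix with rows alpha and columns
   beta (both listed in increasing order), for #alpha = #beta. *)
Definition minor {R : comNzRingType} n (A : 'M[R]_n) (alpha beta : {set 'I_n})
  (h : #|alpha| = #|beta|) : R :=
  \det (\matrix_(i < #|alpha|, j < #|alpha|)
          A (enum_val i) (enum_val (cast_ord h j))).

(* P-matrix: all principal minors positive (A[emptyset] = 1 automatically). *)
Definition P_matrix {R : numDomainType} n (A : 'M[R]_n) : Prop :=
  forall alpha : {set 'I_n}, 0 < minor A (erefl #|alpha|).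

Definition weakly_sign_symmetric {R : numDomainType} n (A : 'M[R]_n) : Prop :=
  forall (alpha beta : {set 'I_n}) (h : #|alpha| = #|beta|),
    #|alpha :|: beta| = #|alpha|.+1 ->
    0 <= minor A h * minor A (esym h).

Definition GKK {R : numDomainType} n (A : 'M[R]_n) : Prop :=
  weakly_sign_symmetric A /\ P_matrix A.

(* Main.v *)
Require Import Defs.
From mathcomp Require Import all_boot all_order all_algebra.
From mathcomp Require Import reals.
From mathcomp Require Import zify.
From Stdlib Require Import Lia.
From mathcomp Require Import ring.
Import Order.TTheory GRing.Theory Num.Theory.
Local Open Scope ring_scope.
Set Implicit Arguments. Unset Strict Implicit. Unset Printing Implicit Defensive.

Section M.
Variable R : comNzRingType.
Variable a : nat -> R.

Definition ent (i j : nat) : R :=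
  if (i <= j)%N then a (j - i)%N else if i == j.+1 then 1 else 0.

Definition Mx m (r c : seq nat) : 'M[R]_m :=
  \matrix_(p < m, q < m) ent (nth 0%N r p) (nth 0%N c q).

Lemma ent0 i j : (j.+1 < i)%N -> ent i j = 0.
Proof.
move=> h; rewrite /ent.
have -> : (i <= j)%N = false by apply/negbTE; rewrite -ltnNge; lia.
by have -> : (i == j.+1) = false by apply/negbTE; lia.
Qed.

Lemma entD u i j : ent (u + i) (u + j) = ent i j.
Proof.
rewrite /ent leq_add2l subnDl.
by have -> : (u + i == (u + j).+1) = (i == j.+1) by apply/eqP/eqP; lia.
Qed.

Lemma det_split m1 m2 r1 r2 c1 c2 :
  size r1 = m1 -> size c1 = m1 -> size r2 = m2 ->
  (forall i j, i \in r2 -> j \in c1 -> (j.+1 < i)%N) ->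
  \det (Mx (m1 + m2) (r1 ++ r2) (c1 ++ c2)) =
  \det (Mx m1 r1 c1) * \det (Mx m2 r2 c2).
Proof.
move=> s1 s2 s3 hz.
rewrite -[Mx _ _ _](submxK).
have -> : dlsubmx (Mx (m1 + m2) (r1 ++ r2) (c1 ++ c2)) = 0.
  apply/matrixP => i j; rewrite !mxE /= nth_cat s1 ltnNge leq_addr /= addKn.
  rewrite nth_cat s2 ltn_ord; apply: ent0; apply: hz.
    by apply: mem_nth; rewrite s3.
  by apply: mem_nth; rewrite s2.
rewrite det_ublock; f_equal; f_equal; apply/matrixP => i j;
  rewrite !mxE /= !nth_cat s1 s2 ?ltn_ord //.
by rewrite ltnNge leq_addr /= ltnNge leq_addr /= !addKn.
Qed.

Lemma Mx_shift m u r c : size r = m -> size c = m ->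
  Mx m (map (addn u) r) (map (addn u) c) = Mx m r c.
Proof.
move=> sr sc; apply/matrixP => i j; rewrite !mxE.
by rewrite !(nth_map 0%N) ?sr ?sc ?ltn_ord // entD.
Qed.

Lemma det_zero_col m r c0 c : size r = m.+1 ->
  (forall i, i \in r -> (c0.+1 < i)%N) -> \det (Mx m.+1 r (c0 :: c)) = 0.
Proof.
move=> sr h; rewrite (expand_det_col _ ord0) big1 // => i _.
rewrite mxE /= ent0 ?mul0r //; apply: h; apply: mem_nth; by rewrite sr.
Qed.

Lemma toepHess_Mx n : toepHess a n = Mx n (iota 0 n) (iota 0 n).
Proof. by apply/matrixP => i j; rewrite !mxE !nth_iota. Qed.

Lemma nth_bump n j q : (j <= n)%N -> (q < n)%N ->
  nth 0%N (iota 0 j ++ iota j.+1 (n - j)) q = bump j q.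
Proof.
move=> hj hq; rewrite nth_cat size_iota /bump.
case: ltnP => hqj.
  by rewrite nth_iota // leqNgt hqj.
by rewrite nth_iota ?hqj; lia.
Qed.

Lemma det_tri j : \det (Mx j (iota 1 j) (iota 0 j)) = 1.
Proof.
rewrite -det_tr det_trig; last first.
  apply/is_trig_mxP => p q hpq; rewrite !mxE !nth_iota // ent0 //; lia.
by rewrite big1 // => i _; rewrite !mxE !nth_iota // /ent ltnn eqxx.
Qed.

Lemma det_del0 n j : (j <= n)%N ->
  \det (Mx n (iota 1 n) (iota 0 j ++ iota j.+1 (n - j))) = \det (toepHess a (n - j)).
Proof.
move=> hj; have [l ->] : exists l, n = (j + l)%N by exists (n - j)%N; lia.
rewrite (_ : (j + l - j = l)%N); last lia.
rewrite iotaD det_split ?size_iota // ?det_tri ?mul1r; last first.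
  by move=> i k; rewrite !mem_iota; lia.
have E : iota j.+1 l = map (addn j.+1) (iota 0 l) by rewrite -iotaDl addn0.
by rewrite toepHess_Mx add1n E Mx_shift ?size_iota.
Qed.

Lemma FRE n : \det (toepHess a n.+1) =
  \sum_(j < n.+1) (-1) ^+ j * a j * \det (toepHess a (n - j)).
Proof.
rewrite (expand_det_row _ ord0); apply: eq_bigr => j _.
rewrite /cofactor mxE /ent /= subn0 add0n mulrA [a j * _]mulrC.
congr (_ * _); rewrite -(det_del0 (n:=n) (j:=j)) //; last by rewrite -ltnS.
f_equal; apply/matrixP => p q; rewrite !mxE nth_iota // nth_bump //.
by rewrite -ltnS.
Qed.
End M.

Section Y.
Variable R : fieldType.
Variable a : nat -> R.
Local Notation e n := (\det (toepHess a n)).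
Definition hh (s : nat) : R := if s is s'.+1 then a s' else 1.

Lemma Phi n : \sum_(s < n.+1) (-1) ^+ s * hh s * e (n - s) = (n == 0)%:R.
Proof.
case: n => [|n].
  by rewrite big_ord1 /= det_mx00 !mul1r.
rewrite big_ord_recl /= subn0 expr0 !mul1r.
rewrite [X in _ + X](_ : _ = - e n.+1) ?subrr //.
rewrite FRE -sumrN; apply: eq_bigr => j _.
by rewrite /bump /= add1n subSS exprS !mulN1r !mulNr.
Qed.

Definition Q r m := \sum_(0 <= j < m) ent a r j * (-1) ^+ j * e (m - 1 - j).

Lemma Q0 m : Q 0 m = e m - (m == 0)%:R.
Proof.
case: m => [|n]; first by rewrite /Q big_geq // det_mx00 subrr.
rewrite /Q big_mkord FRE subr0; apply: eq_bigr => j _.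
by rewrite /ent /= subn0 subn1 /= [a j * _]mulrC.
Qed.

Lemma alg0 (x y z w : R) : x * (y * z) * w = z * (y * x * w).
Proof. ring. Qed.

Lemma QS r m : Q r.+1 m = (-1) ^+ r * (m == r.+1)%:R.
Proof.
have [hm|hm] := leqP m r.
  have hne : (m == r.+1) = false by apply/negbTE; rewrite neq_ltn ltnS hm.
  rewrite hne mulr0 /Q big1_seq // => j.
  rewrite mem_iota => /andP [_ hj]; rewrite ent0 ?mul0r //.
  lia.
have [n ->] : exists n, m = (r + n.+1)%N by exists (m - r.+1)%N; lia.
rewrite /Q (big_cat_nat _ (n := r)) //=; last lia.
rewrite big1_seq ?add0r; last first.
  move=> j; rewrite mem_iota => /andP [_ hj]; rewrite ent0 ?mul0r //; lia.
rewrite -{1}(add0n r) big_addn (_ : (r + n.+1 - r = n.+1)%N); last lia.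
rewrite big_mkord -[(r + n.+1 == r.+1)](_ : (n == 0) = _); last by apply/eqP/eqP; lia.
rewrite -Phi mulr_sumr; apply: eq_bigr => s _.
rewrite (_ : (r + n.+1 - 1 - (s + r) = n - s)%N); last lia.
rewrite exprD /ent; case: (nat_of_ord s) => [|s'] /=.
  by rewrite add0n ltnn eqxx expr0 subn0 !mul1r.
rewrite (_ : (r < s'.+1 + r)%N = true); last lia.
rewrite (_ : (s'.+1 + r - r.+1 = s')%N); last lia.
by rewrite alg0.
Qed.

Definition Ym L : 'M[R]_L := \matrix_(j, i) ((-1) ^+ (i + j) *
   (e i * e (L - 1 - j) - (if (j < i)%N then e L * e (i - j - 1) else 0))).

Lemma alg1 (x s1 s2 u v w z : R) :
  x * (s1 * s2 * (u * v - w * z)) = s1 * (u * (x * s2 * v) - w * (x * s2 * z)).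
Proof. ring. Qed.

Lemma alg2 (x s1 s2 u v : R) :
  x * (s1 * s2 * (u * v)) = s1 * (u * (x * s2 * v)).
Proof. ring. Qed.

Lemma mulY L : toepHess a L *m Ym L = (e L)%:M.
Proof.
apply/matrixP => r i; rewrite !mxE.
have E1 : Q r L = \sum_(j < L) ent a r j * (-1) ^+ j * e (L - 1 - j).
  by rewrite /Q big_mkord.
have E2 : Q r i = \sum_(j < L) (if (j < i)%N then ent a r j * (-1) ^+ j * e (i - 1 - j) else 0).
  rewrite /Q big_mkord (big_ord_widen L (fun j => ent a r j * (-1) ^+ j * e (i - 1 - j))) ?big_mkcond //.
  exact: ltnW.
have -> : \sum_j toepHess a L r j * Ym L j i = (-1) ^+ i * (e i * Q r L - e L * Q r i).
  rewrite E1 E2 !mulr_sumr -sumrB mulr_sumr; apply: eq_bigr => j _.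
  rewrite [toepHess a L r j]mxE -/(ent a r j) [Ym L j i]mxE exprD.
  case: (ltnP j i) => hj.
    rewrite (_ : (i - j - 1 = i - 1 - j)%N); last lia.
    by rewrite alg1.
  by rewrite !mulr0 !subr0 alg2.
have hr := ltn_ord r; have hi := ltn_ord i.
have -> : (r == i) = (nat_of_ord r == nat_of_ord i) by [].
move: (nat_of_ord r) (nat_of_ord i) hr hi => rr ii hr hi.
have hL : (L == 0) = false by apply/negbTE; rewrite -lt0n; apply: leq_ltn_trans hi.
case: rr hr => [|r'] hr.
  rewrite !Q0 hL; case: ii hi => [|ii] hi /=.
    by rewrite expr0; move: (e 0) (e L) => x y; ring.
  by move: ((-1) ^+ ii.+1) (e ii.+1) (e L) => z x y; ring.
rewrite !QS (_ : (L == r'.+1) = false); last by apply/negbTE; rewrite neq_ltn hr orbT.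
rewrite -[(-1) ^+ r']signr_odd -[(-1) ^+ ii]signr_odd eq_sym.
case: (ii =P r'.+1) => [->|ne] /=.
  rewrite eqxx /=; case: (odd r'); move: (e r'.+1) (e L) => x y /=.
  by rewrite ?expr0 ?expr1 /=; ring.
  by rewrite ?expr0 ?expr1 /=; ring.
rewrite (_ : (r'.+1 == ii) = false); last by apply/negbTE/eqP => h; apply: ne.
by move: ((-1) ^+ (odd ii)) ((-1) ^+ (odd r')) (e ii) (e L) => z w x y; rewrite /= ?mulr0n; ring.
Qed.

Lemma adjY L : e L != 0 -> \adj (toepHess a L) = Ym L.
Proof.
move=> hL; apply: (scalerI hL).
have h1 : \adj (toepHess a L) *m (toepHess a L *m Ym L) = e L *: \adj (toepHess a L).
  by rewrite mulY mul_mx_scalar.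
by rewrite -h1 mulmxA mul_adj_mx mul_scalar_mx.
Qed.

Lemma cofprod L (x y : 'I_L.+1) : e L.+1 != 0 ->
  \det (row' y (col' x (toepHess a L.+1))) * \det (row' x (col' y (toepHess a L.+1)))
  = Ym L.+1 x y * Ym L.+1 y x.
Proof.
move=> hL; rewrite -adjY // /adjugate !mxE /cofactor addnC.
rewrite mulrACA -expr2 sqrr_sign mul1r //.
Qed.
End Y.

Section Pos.
Variable R : realType.
Variable a : nat -> R.
Variables (k : nat) (t : R).
Hypothesis t0 : 0 < t.
Hypothesis t1 : t <= 1.
Local Notation e n := (\det (toepHess a n)).
Hypothesis he : forall n, e n = t ^+ (n - k - 1).

Lemma e_gt0 n : 0 < e n.
Proof. by rewrite he exprn_gt0. Qed.

Lemma Ypos L (x y : 'I_L) : 0 <= Ym a L x y * Ym a L y x.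
Proof.
wlog hxy : x y / (x <= y)%N.
  move=> W; case: (leqP x y) => h; first exact: W.
  by rewrite mulrC; apply: W; apply: ltnW.
rewrite !mxE mulrACA addnC -expr2 sqrr_sign mul1r.
case: (ltnP x y) => hlt; last first.
  have -> : x = y by apply/val_inj/eqP; rewrite eqn_leq hxy hlt.
  by rewrite ltnn subr0 mulr_ge0 // ?subr0 mulr_ge0 // ltW // e_gt0.
rewrite (_ : (y < x)%N = false); last by apply/negbTE; rewrite -leqNgt ltnW.
rewrite subr0 mulr_ge0 //; last by rewrite mulr_ge0 // ltW // e_gt0.
rewrite subr_ge0 !he -!exprD; apply: (ler_wiXn2l (ltW t0) t1).
have := ltn_ord y; lia.
Qed.
End Pos.

Lemma decomp (U : seq nat) : sorted ltn U -> U != [::] ->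
  exists u L W, [/\ U = iota u L.+1 ++ W, sorted ltn W &
     (forall w, w \in W -> (u + L.+1 < w)%N)].
Proof.
elim: U => // x U IH hs _.
case: U IH hs => [|y U'] IH hs.
  by exists x, 0%N, [::]; split.
move: hs => /= /andP [hxy hs].
have [u [L [W [E hW hg]]]] := IH hs isT.
have uy : u = y by case: E.
case: (y =P x.+1) => hy.
  exists x, L.+1, W; split => //.
    by rewrite E uy hy.
  by move=> w /hg; rewrite uy hy; lia.
exists x, 0%N, (y :: U'); split => //.
move=> w; rewrite inE => /orP [/eqP ->|hw]; first lia.
have := order_path_min ltn_trans hs.
move/allP => /(_ w hw) /=; lia.
Qed.

Definition flt (x : nat) (U : seq nat) := filter (predC1 x) U.

Lemma flt_iota n i : (i <= n)%N ->
  flt i (iota 0 n.+1) = iota 0 i ++ iota i.+1 (n - i).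
Proof.
move=> hi; rewrite /flt (_ : n.+1 = i + (n - i).+1)%N; last lia.
rewrite iotaD filter_cat add0n /=.
rewrite eqxx /= (eq_in_filter (a2 := predT)) ?filter_predT; last first.
  by move=> v; rewrite mem_iota /=; lia.
rewrite (eq_in_filter (a2 := predT) (s := iota i.+1 _)) ?filter_predT //.
by move=> v; rewrite mem_iota /=; lia.
Qed.

Lemma flt_shift u n x : (u <= x)%N ->
  flt x (iota u n) = map (addn u) (flt (x - u) (iota 0 n)).
Proof.
move=> hx; rewrite /flt -(addn0 u) iotaDl filter_map addn0; congr map.
by apply: eq_filter => v /=; apply/negbRL; apply/eqP/eqP; lia.
Qed.

Lemma size_flt_iota n i : (i <= n)%N -> size (flt i (iota 0 n.+1)) = n.
Proof. by move=> hi; rewrite flt_iota // size_cat !size_iota; lia. Qed.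

Section Main.
Variable R : realType.
Variable a : nat -> R.
Variables (k : nat) (t : R).
Hypothesis t0 : 0 < t.
Hypothesis t1 : t <= 1.
Local Notation e n := (\det (toepHess a n)).
Hypothesis he : forall n, e n = t ^+ (n - k - 1).

Lemma ICof n x y : (x <= n)%N -> (y <= n)%N ->
  \det (Mx a n (flt y (iota 0 n.+1)) (flt x (iota 0 n.+1))) =
  \det (row' (inord y) (col' (inord x) (toepHess a n.+1))).
Proof.
move=> hx hy; f_equal; apply/matrixP => p q; rewrite !mxE !flt_iota //.
by rewrite !nth_bump // /= !inordK.
Qed.

Lemma IntPos n x y : (x <= n)%N -> (y <= n)%N ->
  0 <= \det (Mx a n (flt y (iota 0 n.+1)) (flt x (iota 0 n.+1))) *
       \det (Mx a n (flt x (iota 0 n.+1)) (flt y (iota 0 n.+1))).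
Proof.
move=> hx hy; rewrite !ICof // cofprod; first exact: (Ypos t0 t1 he).
by rewrite lt0r_neq0 // (e_gt0 t0 he).
Qed.

Lemma IntPosU u n x y : (u <= x <= u + n)%N -> (u <= y <= u + n)%N ->
  0 <= \det (Mx a n (flt y (iota u n.+1)) (flt x (iota u n.+1))) *
       \det (Mx a n (flt x (iota u n.+1)) (flt y (iota u n.+1))).
Proof.
move=> /andP [hx1 hx2] /andP [hy1 hy2].
rewrite !(flt_shift _ hx1) !(flt_shift _ hy1) !Mx_shift ?size_flt_iota; try lia.
apply: IntPos; lia.
Qed.

Lemma eV u L : \det (Mx a L (iota u L) (iota u L)) = e L.
Proof.
by rewrite -(addn0 u) iotaDl Mx_shift ?size_iota // toepHess_Mx.
Qed.

Lemma Ppos U : sorted ltn U -> 0 < \det (Mx a (size U) U U).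
Proof.
have [N] := ubnP (size U); elim: N U => // N IH U hN hs.
case: (U =P [::]) => [->|/eqP hU]; first by rewrite det_mx00 ltr01.
have [u [L [W [E hW hg]]]] := decomp hs hU.
rewrite E size_cat size_iota det_split ?size_iota //; last first.
  by move=> i j /hg hi; rewrite mem_iota; lia.
rewrite eV mulr_gt0 ?(e_gt0 t0 he) //; apply: IH => //.
by move: hN; rewrite E size_cat size_iota; lia.
Qed.

Lemma size_flt (W : seq nat) y : uniq W -> y \in W -> size (flt y W) = (size W).-1.
Proof.
move=> hu hy; rewrite /flt size_filter.
have h1 := count_predC (pred1 y) W.
have h2 : count (predC (pred1 y)) W = count (predC1 y) W by apply: eq_count.
have h3 := count_uniq_mem y hu; rewrite hy /= in h3.
rewrite h2 h3 in h1; rewrite -h1 add1n //.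
Qed.

Lemma flt_id z (W : seq nat) : z \notin W -> flt z W = W.
Proof.
move=> hz; apply/all_filterP/allP => v hv /=; apply/eqP => e; subst.
by rewrite hv in hz.
Qed.

Lemma size_flt_iotaU u L z : z \in iota u L.+1 -> size (flt z (iota u L.+1)) = L.
Proof.
rewrite mem_iota => hz; rewrite (flt_shift _ (_ : u <= z)%N); last lia.
by rewrite size_map size_flt_iota //; lia.
Qed.

Lemma flt_cat z s1 s2 : flt z (s1 ++ s2) = flt z s1 ++ flt z s2.
Proof. exact: filter_cat. Qed.

Lemma Zcase u L W x y : x \in iota u L.+1 -> y \in W ->
  (forall w, w \in W -> (u + L.+1 < w)%N) ->
  \det (Mx a (L + size W) (flt x (iota u L.+1) ++ W) (iota u L.+1 ++ flt y W)) = 0.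
Proof.
move=> hx hy hg.
have -> : iota u L.+1 ++ flt y W = iota u L ++ (u + L)%N :: flt y W.
  by rewrite -addn1 iotaD -catA.
rewrite det_split ?size_iota ?size_flt_iotaU //; last first.
  by move=> i j /hg hi; rewrite mem_iota; lia.
case: W hy hg => // w0 W' _ hg.
by rewrite det_zero_col ?mulr0 // => i /hg; lia.
Qed.

Lemma Wpos U x y : sorted ltn U -> x \in U -> y \in U ->
  0 <= \det (Mx a (size U).-1 (flt y U) (flt x U)) *
       \det (Mx a (size U).-1 (flt x U) (flt y U)).
Proof.
have [N] := ubnP (size U); elim: N U => // N IH U hN hs hx hy.
case: (x =P y) => [->|nxy]; first by rewrite -expr2 sqr_ge0.
have hU : U != [::] by apply/eqP => E; rewrite E in hx.
have [u [L [W [E hW hg]]]] := decomp hs hU.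
have hVW : forall z, z \in iota u L.+1 -> z \notin W.
  by move=> z; rewrite mem_iota => hz; apply/negP => /hg; lia.
have hWV : forall z, z \in W -> z \notin iota u L.+1.
  by move=> z /hg hz; rewrite mem_iota; lia.
have uW : uniq W by apply: (sorted_uniq ltn_trans ltnn).
move: hx hy; rewrite E !mem_cat.
case hxV: (x \in iota u L.+1); case hyV: (y \in iota u L.+1) => hxW hyW; rewrite /= in hxW hyW.
-
  rewrite !flt_cat !(flt_id (hVW _ _)) // size_cat size_iota addSn succnK.
  have sx := size_flt_iotaU hxV; have sy := size_flt_iotaU hyV.
  rewrite !det_split //; last 2 first.
  + by move=> i j /hg hi; rewrite mem_filter mem_iota; lia.
  + by move=> i j /hg hi; rewrite mem_filter mem_iota; lia.
  rewrite mulrACA; apply: mulr_ge0; last by rewrite -expr2 sqr_ge0.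
  move: hxV hyV; rewrite !mem_iota => hxV hyV.
  apply: IntPosU; lia.
- rewrite !flt_cat (flt_id (hVW _ hxV)) (flt_id (hWV _ hyW)) size_cat size_iota addSn succnK.
  by rewrite Zcase // mulr0.
- rewrite !flt_cat (flt_id (hWV _ hxW)) (flt_id (hVW _ hyV)) size_cat size_iota addSn succnK.
  by rewrite Zcase // mul0r.
- rewrite !flt_cat !(flt_id (hWV _ _)) // size_cat size_iota.
  have sW : (0 < size W)%N by case: (W) hxW.
  rewrite (_ : ((L.+1 + size W).-1 = L.+1 + (size W).-1)%N); last by lia.
  rewrite !det_split ?size_iota ?size_flt //; last 2 first.
  + by move=> i j; rewrite mem_filter => /andP [_ /hg hi]; rewrite mem_iota; lia.
  + by move=> i j; rewrite mem_filter => /andP [_ /hg hi]; rewrite mem_iota; lia.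
  rewrite mulrACA; apply: mulr_ge0; first by rewrite -expr2 sqr_ge0.
  apply: IH => //; move: hN; rewrite E size_cat size_iota; lia.
Qed.
End Main.

Lemma posp_nat (n k : nat) : posp (n%:Z - k%:Z - 1) = (n - k - 1)%N.
Proof.
rewrite /posp; case: (leqP k.+1 n) => h.
  have -> : n%:Z - k%:Z - 1 = ((n - k - 1)%N)%:Z by lia.
  by rewrite max_l.
have -> : Num.max (n%:Z - k%:Z - 1) 0 = 0 by rewrite max_r //; lia.
by rewrite /=; lia.
Qed.

Section Exist.
Variable R : realType.
Variable E : nat -> R.
Hypothesis E0 : E 0 = 1.

Definition newval (s : seq R) n :=
  (-1) ^+ n * (E n.+1 - \sum_(j < n) (-1) ^+ j * nth 0 s j * E (n - j)).

Fixpoint hseq n : seq R :=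
  if n is n'.+1 then rcons (hseq n') (newval (hseq n') n') else [::].

Definition aa i := nth 0 (hseq i.+1) i.

Lemma size_hseq n : size (hseq n) = n.
Proof. by elim: n => //= n IH; rewrite size_rcons IH. Qed.

Lemma hseq_prefix n i : (i < n)%N -> nth 0 (hseq n) i = aa i.
Proof.
elim: n => // n IH hi; rewrite /= nth_rcons size_hseq.
case: ltnP => h; first by rewrite IH.
have -> : i = n by lia.
by rewrite /aa /= nth_rcons size_hseq ltnn eqxx.
Qed.

Lemma aaE n : aa n = (-1) ^+ n * (E n.+1 - \sum_(j < n) (-1) ^+ j * aa j * E (n - j)).
Proof.
rewrite {1}/aa /= nth_rcons size_hseq ltnn eqxx /newval.
congr (_ * (_ - _)); apply: eq_bigr => j _; by rewrite hseq_prefix.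
Qed.

Lemma aa_det n : \det (toepHess aa n) = E n.
Proof.
have [N] := ubnP n; elim: N n => // N IH [|n] hn; first by rewrite det_mx00 E0.
rewrite FRE big_ord_recr /= subnn.
rewrite (eq_bigr (fun j : 'I_n => (-1) ^+ j * aa j * E (n - j))); last first.
  by move=> j _; rewrite IH //; lia.
rewrite det_mx00 mulr1 aaE mulrA -expr2 sqrr_sign mul1r.
by rewrite addrC subrK.
Qed.
End Exist.

Definition sq n (A : {set 'I_n}) : seq nat := map val (enum A).

Lemma size_sq n (A : {set 'I_n}) : size (sq A) = #|A|.
Proof. by rewrite size_map cardE. Qed.

Lemma enum_filter n (A : {set 'I_n}) : enum A = filter (mem A) (enum 'I_n).
Proof. by rewrite enumT. Qed.

Lemma sq_sorted n (A : {set 'I_n}) : sorted ltn (sq A).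
Proof.
apply: (subseq_sorted ltn_trans (s2 := iota 0 n)); last exact: iota_ltn_sorted.
by rewrite -val_enum_ord; apply: map_subseq; rewrite enum_filter filter_subseq.
Qed.

Lemma sq_D1 n (A : {set 'I_n}) y : sq (A :\ y) = flt (val y) (sq A).
Proof.
rewrite /sq /flt filter_map; congr map.
rewrite [in RHS](enum_filter A) -[in RHS]filter_predI [in LHS]enum_filter.
apply: eq_filter => z /=.
by rewrite !inE andbC.
Qed.

Lemma sq_nth n (A : {set 'I_n}) (i : 'I_#|A|) : nth 0%N (sq A) i = enum_val i.
Proof. by rewrite /sq (nth_map (enum_val i)) -?cardE // -enum_val_nth. Qed.

Lemma minor_Mx (R : comNzRingType) (a : nat -> R) n (al be : {set 'I_n}) (h : #|al| = #|be|) :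
  minor (toepHess a n) h = \det (Mx a #|al| (sq al) (sq be)).
Proof.
rewrite /minor; f_equal; apply/matrixP => i j; rewrite !mxE.
by rewrite sq_nth (sq_nth (cast_ord h j)).
Qed.

Lemma set_one n (al be : {set 'I_n}) y : be :\: al = [set y] ->
  al = (al :|: be) :\ y /\ y \in be.
Proof.
move=> Ey; have := set11 y; rewrite -Ey inE => /andP [yal ybe].
split => //; apply/setP => z; rewrite !inE.
by case: (z \in al); case: (z \in be).
Qed.

Lemma set_pair n (al be : {set 'I_n}) : #|al| = #|be| -> #|al :|: be| = #|al|.+1 ->
  exists x y, [/\ al = (al :|: be) :\ y, be = (al :|: be) :\ x, x \in al & y \in be].
Proof.
move=> h hU.
have c1 := cardsUI al be; have c2 := cardsID be al; have c3 := cardsID al be.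
rewrite setIC in c3.
have /cards1P [y Ey] : #|be :\: al| == 1 by apply/eqP; lia.
have /cards1P [x Ex] : #|al :\: be| == 1 by apply/eqP; lia.
have [E1 yb] := set_one Ey; have [E2 xa] := set_one Ex.
by exists x, y; split => //; rewrite setUC.
Qed.

Unset Implicit Arguments.

Theorem proposition2 (R : realType) (k : nat) (t : R) :
  0 < t < 1 ->
  (exists a : nat -> R, leading_minors_prop k t a) /\
  (forall a : nat -> R, leading_minors_prop k t a ->
     forall n : nat, GKK (toepHess a n)).
Proof.
move=> /andP [t0 t1]; have t1' := ltW t1; split.
  have E0 : (fun n => t ^+ (n - k - 1)) 0%N = 1 by rewrite /= expr0.
  exists (aa (fun n => t ^+ (n - k - 1))) => n hn.
  by rewrite (@aa_det R (fun n => t ^+ (n - k - 1)%N) E0) posp_nat.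
move=> a ha n.
have he : forall m, \det (toepHess a m) = t ^+ (m - k - 1).
  case=> [|m]; first by rewrite det_mx00 expr0.
  by rewrite ha // posp_nat.
split.
  move=> al be h hU.
  have [x [y [Ea Eb xa yb]]] := set_pair h hU.
  have Sal : sq al = flt (val y) (sq (al :|: be)) by rewrite {1}Ea sq_D1.
  have Sbe : sq be = flt (val x) (sq (al :|: be)) by rewrite {1}Eb sq_D1.
  rewrite !minor_Mx Sal Sbe -h.
  have dim : #|al| = (size (sq (al :|: be))).-1 by rewrite size_sq hU.
  rewrite dim; apply: (Wpos t0 t1' he); first exact: sq_sorted.
    by apply: map_f; rewrite mem_enum inE xa.
  by apply: map_f; rewrite mem_enum inE yb orbT.
move=> al; rewrite minor_Mx -size_sq; apply: (Ppos t0 t1' he).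
exact: sq_sorted.
Qed.
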